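(* Let $A=(a(x),dF(x))$ and $B=(b(x),dF(x))$ be games. Then $f(p)=\exp\big(\int\log(pa(x)+(1-p)b(x))\,dF(x)\big)/e^r$ is continuous on $[0,1]$.
   Context: A game is a pair $(a(x),dF(x))$ with $dF$ a probability measure on $\mathbb{R}$ and $a\ge0$ measurable with finite positive integral. A real $r$ is fixed; convention $\exp(-\infty)=0$. *)

(* Defs.v *)
From HB Require Import structures.
From mathcomp Require Import all_boot all_order all_algebra.
From mathcomp Require Import all_classical all_reals all_analysis.
Set Implicit Arguments. Unset Strict Implicit. Unset Printing Implicit Defensive.
Import Order.TTheory GRing.Theory Num.Theory.
Import numFieldNormedType.Exports.
Local Open Scope ring_scope.
Local Open Scope ereal_scope.

Definition elog {R : realType} (y : R) : \bar R :=
  if (0 < y)%R then (ln y)%:E else -oo.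

Definition is_game {R : realType} (F : probability R R) (a : R -> R) : Prop :=
  [/\ (forall x, (0 <= a x)%R), measurable_fun setT a,
      0 < \int[F]_x (a x)%:E & \int[F]_x (a x)%:E < +oo].

Definition fgame {R : realType} (F : probability R R) (a b : R -> R) (r p : R) : R :=
  (fine (expeR (\int[F]_x elog (p * a x + (1 - p) * b x)%R)) / expR r)%R.

(* Main.v *)
Require Import Defs.
From HB Require Import structures.
From mathcomp Require Import all_boot all_order all_algebra.
From mathcomp Require Import all_classical all_reals all_analysis.
From mathcomp Require Import ring lra measurable_realfun.
Import Order.TTheory GRing.Theory Num.Theory.
Import numFieldNormedType.Exports.
Local Open Scope classical_set_scope.
Local Open Scope ring_scope.
Set Implicit Arguments. Unset Strict Implicit.

Lemma elog_gt0 {R : realType} (y : R) : 0 < y -> elog y = (ln y)%:E.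
Proof. by rewrite /elog => ->. Qed.

Lemma elog_le0 {R : realType} (y : R) : y <= 0 -> elog y = -oo%E.
Proof. by rewrite /elog leNgt => /negbTE ->. Qed.

Lemma measurable_elog {R : realType} (d : measure_display) (T : measurableType d)
  (g : T -> R) : measurable_fun setT g -> measurable_fun setT (@elog R \o g).
Proof.
move=> mg; rewrite /elog.
apply: measurable_fun_ifT.
- by apply: measurable_fun_ltr => //; exact: measurable_cst.
- apply/measurable_EFinP; apply: measurableT_comp => //; exact: measurable_ln.
- exact: measurable_cst.
Qed.

Lemma elog_le {R : realType} (y z : R) : 0 <= y -> y <= z -> (elog y <= elog z)%E.
Proof.
move=> y0 yz; case: (ltrP 0 y) => hy.
  rewrite !elog_gt0 ?(lt_le_trans hy) // lee_fin ler_ln // posrE //.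
  exact: lt_le_trans hy yz.
by rewrite elog_le0 // leNye.
Qed.

Lemma ln_le_id {R : realType} (y : R) : 0 < y -> ln y <= y - 1.
Proof.
move=> y0; have h := @le_ln1Dx R (y - 1).
have e : 1 + (y - 1) = y by ring.
rewrite e in h; apply: h; lra.
Qed.

Lemma elog_pos_le {R : realType} (y : R) : 0 <= y -> ((fun x => elog x)^\+ y <= y%:E)%E.
Proof.
move=> y0; rewrite funeposE; rewrite ge_max lee_fin y0 andbT.
case: (ltrP 0 y) => hy; last by rewrite elog_le0 // leNye.
rewrite elog_gt0 // lee_fin; have := ln_le_id hy; lra.
Qed.

Lemma elog_posD {R : realType} (y e : R) : 0 <= y -> 0 <= e ->
  ((fun x => elog x)^\+ (y + e)%R <= (fun x => elog x)^\+ y + e%:E)%E.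
Proof.
move=> y0 e0; rewrite !funeposE.
case: (ltrP 0 (y + e)) => hye; last first.
  rewrite elog_le0 // ge_max; apply/andP; split; first by rewrite leNye.
  by apply: adde_ge0 => //; rewrite le_max lexx orbT.
rewrite elog_gt0 // ge_max; apply/andP; split; last first.
  by apply: adde_ge0 => //; rewrite le_max lexx orbT.
case: (ltrP y 1) => hy.
  apply: (@le_trans _ _ e%:E); last by rewrite leeDr // le_max lexx orbT.
  have := ln_le_id hye; rewrite lee_fin; lra.
have y0' : 0 < y by lra.
rewrite elog_gt0 // (_ : maxe (ln y)%:E 0 = (ln y)%:E); last first.
  by apply/max_idPl; rewrite lee_fin -ln1 ler_ln // posrE.
rewrite -EFinD lee_fin.
have -> : y + e = y * (1 + e / y) by field; lra.
rewrite lnM ?posrE //; last by rewrite ltr_wpDr // divr_ge0 //; lra.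
rewrite lerD2l; apply: le_trans (le_ln1Dx _) _.
  by apply: lt_le_trans (divr_ge0 e0 (ltW y0')); lra.
rewrite ler_pdivrMr //; nra.
Qed.

Local Open Scope ereal_scope.

Lemma ge0_le_int {R : realType} (F : probability R R) (f1 f2 : R -> \bar R) :
  (forall x, 0 <= f1 x) -> measurable_fun setT f1 -> measurable_fun setT f2 ->
  (forall x, f1 x <= f2 x) -> \int[F]_x f1 x <= \int[F]_x f2 x.
Proof.
move=> h0 m1 m2 h.
exact: (ge0_le_integral F measurableT (fun x _ => h0 x) m1 m2 (fun x _ => h x)).
Qed.

Lemma int_mono {R : realType} (F : probability R R) (f g : R -> \bar R) :
  measurable_fun setT f -> measurable_fun setT g -> (forall x, f x <= g x) ->
  \int[F]_x f x <= \int[F]_x g x.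
Proof.
move=> mf mg fg; rewrite [X in X <= _]integralE [X in _ <= X]integralE; apply: leeB.
  apply: ge0_le_int.
  - by move=> *; exact: funepos_ge0.
  - exact: measurable_funepos.
  - exact: measurable_funepos.
  - by move=> x; apply: (@funepos_le _ _ setT f g); [move=> y _; exact: fg| rewrite in_setT].
apply: ge0_le_int.
- by move=> *; exact: funeneg_ge0.
- exact: measurable_funeneg.
- exact: measurable_funeneg.
- by move=> x; apply: (@funeneg_le _ _ setT f g); [move=> y _; exact: fg| rewrite in_setT].
Qed.

Lemma integrable_of {R : realType} (F : probability R R) (f : R -> \bar R) (g : R -> R) :
  measurable_fun setT f -> (forall x, (0 <= g x)%R) -> measurable_fun setT g ->
  \int[F]_x (g x)%:E < +oo -> (forall x, f x <= (g x)%:E) ->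
  -oo < \int[F]_x f x -> F.-integrable setT f.
Proof.
move=> mf g0 mg gfin fg fgt.
have Pfin : \int[F]_x f^\+ x < +oo.
  apply: le_lt_trans gfin; apply: ge0_le_int.
  - by move=> *; exact: funepos_ge0.
  - exact: measurable_funepos.
  - by apply/measurable_EFinP.
  - by move=> x; rewrite funeposE ge_max fg lee_fin g0.
have Nfin : \int[F]_x f^\- x < +oo.
  rewrite ltey; apply/negP => /eqP Ninf; move: fgt.
  by rewrite integralE Ninf /= addeNy ltxx.
apply/integrableP; split => //.
rewrite (_ : (fun x => `|f x|) = (fun x => f^\+ x + f^\- x)); last first.
  by apply/funext => x; have := congr1 (fun h => h x) (fune_abse f).
rewrite (ge0_integralD F measurableT (fun x _ => funepos_ge0 f x) (measurable_funepos mf)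
  (fun x _ => funeneg_ge0 f x) (measurable_funeneg mf)).
exact: lte_add_pinfty.
Qed.

Lemma int_shift {R : realType} (F : probability R R) (f : R -> \bar R) (c : R) :
  F.-integrable setT f ->
  \int[F]_x (c%:E + f x) = c%:E + \int[F]_x f x.
Proof.
move=> fi; rewrite integralD //; last exact: finite_measure_integrable_cst.
rewrite integral_cst //; congr (_ + _); rewrite -[RHS]mule1; congr (_ * _); exact: probability_setT.
Qed.

Lemma expeR_fin {R : realType} (x : \bar R) : x < +oo -> (fine (expeR x))%:E = expeR x.
Proof. by case: x. Qed.

Lemma Emono {R : realType} (F : probability R R) (g1 g2 : R -> R) (l : R) :
  (0 < l)%R -> (forall x, 0 <= g2 x)%R -> (forall x, 0 <= g1 x)%R ->
  measurable_fun setT g1 -> measurable_fun setT g2 ->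
  \int[F]_x (g2 x)%:E < +oo -> (forall x, l * g2 x <= g1 x)%R ->
  l%:E * expeR (\int[F]_x elog (g2 x)) <= expeR (\int[F]_x elog (g1 x)).
Proof.
move=> l0 g20 g10 mg1 mg2 g2fin lg.
have me2 := measurable_elog mg2; have me1 := measurable_elog mg1.
have [I2ninf|I2fin] := eqVneq (\int[F]_x elog (g2 x)) -oo.
  by rewrite I2ninf /= mule0 expeR_ge0.
have fi : F.-integrable setT (fun x => elog (g2 x)).
  apply: (integrable_of (g := g2)) => //.
  - by move=> x; apply: le_trans (elog_pos_le (g20 x)); rewrite funeposE le_max lexx.
  - by rewrite ltNge leeNy_eq.
have -> : l%:E = expeR (ln l)%:E by rewrite /= lnK.
rewrite -expeRD -int_shift // lee_expeR.
apply: int_mono => //.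
- by apply: emeasurable_funD => //; exact: measurable_cst.
move=> x /=; case: (ltrP 0 (g2 x)) => hx; last by rewrite elog_le0 // addeNy leNye.
have h1 : (0 < g1 x)%R by apply: lt_le_trans (lg x); rewrite mulr_gt0.
rewrite !elog_gt0 // -EFinD lee_fin -lnM ?posrE // ler_ln ?posrE // ?mulr_gt0 //.
Qed.

Lemma le_esup_real {R : realType} (S : set (\bar R)) (v : \bar R) :
  (forall r : R, r%:E < v -> exists2 y, S y & r%:E <= y) -> v <= ereal_sup S.
Proof.
move=> H; rewrite leNgt; apply/negP => hlt.
have key : forall r : R, r%:E < v -> ereal_sup S < r%:E -> False.
  move=> r rv sr; have [y Sy ry] := H r rv.
  have := ereal_sup_ubound Sy => ys.
  by have := lt_le_trans (le_lt_trans ys sr) ry; rewrite ltxx.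
move: hlt; case Es: (ereal_sup S) => [s| |] hlt.
- case: v H key hlt => [t| |] H key hlt //.
  + rewrite lte_fin in hlt.
    by apply: (key ((s + t) / 2)%R); rewrite ?Es lte_fin; lra.
  + by apply: (key (s + 1)%R); rewrite ?Es ?ltry // lte_fin; lra.
- by move: hlt; rewrite ltNge leey.
- case: v H key hlt => [t| |] H key hlt //.
  + by apply: (key (t - 1)%R); rewrite ?Es ?ltNye // lte_fin; lra.
  + by apply: (key 0%R); rewrite ?Es ?ltry ?ltNye.
Qed.

Lemma exists_nat_gt {R : realType} (c : R) : exists n : nat, (c < n.+1%:R)%R.
Proof.
case: (lerP 0 c) => hc.
  exists (Num.bound c); apply: lt_le_trans (archi_boundP hc) _.
  by rewrite ler_nat.
by exists 0%N; apply: lt_trans hc _; rewrite ltr01.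
Qed.

Lemma small_inv {R : realType} (a d : R) : (0 <= a)%R -> (0 < d)%R ->
  exists n : nat, (n.+1%:R^-1 * a < d)%R.
Proof.
move=> a0 d0; have [n hn] := exists_nat_gt (a / d).
exists n; rewrite mulrC -/(a / n.+1%:R)%R ltr_pdivrMr //.
by rewrite ltr_pdivrMr // in hn; rewrite mulrC.
Qed.

Lemma inv_nat_le {R : realType} (n m : nat) : (n <= m)%N -> (m.+1%:R^-1 <= n.+1%:R^-1 :> R)%R.
Proof. by move=> nm; rewrite lef_pV2 ?posrE // ler_nat. Qed.

Lemma elog_neg_ge {R : realType} (y r : R) : (0 <= y)%R -> (0 <= r)%R -> (y <= expR (- r))%R ->
  r%:E <= (fun x => elog x)^\- y.
Proof.
move=> y0 r0 yr; rewrite funenegE.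
case: (ltrP 0 y) => hy; last by rewrite elog_le0 //= le_max leey.
rewrite elog_gt0 // le_max; apply/orP; left; rewrite lee_fin lerNr.
by rewrite -(expRK (- r)%R) ler_ln ?posrE ?expR_gt0.
Qed.

Lemma elog_neg_lt {R : realType} (y r : R) : (0 <= y)%R -> (0 <= r)%R ->
  r%:E < (fun x => elog x)^\- y -> (y < expR (- r))%R.
Proof.
move=> y0 r0; rewrite funenegE.
case: (ltrP 0 y) => hy; last by move=> _; apply: le_lt_trans hy _; exact: expR_gt0.
rewrite elog_gt0 // lt_max => /orP[|]; last by rewrite lte_fin ltNge r0.
rewrite -EFinN lte_fin ltrNr => h.
by rewrite -[X in (X < _)%R](@lnK _ y) ?posrE // ltr_expR.
Qed.

Lemma fin_int {R : realType} (F : probability R R) (f : R -> \bar R) :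
  (forall x, 0 <= f x) -> \int[F]_x f x < +oo ->
  \int[F]_x f x = (fine (\int[F]_x f x))%:E.
Proof.
move=> f0 fin; rewrite fineK // ge0_fin_numE //.
by apply: integral_ge0 => x _; exact: f0.
Qed.

Lemma mct_claim {R : realType} (F : probability R R) (a b : R -> R) (y : R) :
  (forall x, 0 <= a x)%R -> (forall x, 0 <= b x)%R ->
  measurable_fun setT a -> measurable_fun setT b ->
  \int[F]_x (a x)%:E < +oo -> \int[F]_x (b x)%:E < +oo ->
  \int[F]_x elog (b x) < y%:E ->
  exists t : R, (0 < t)%R /\ \int[F]_x elog (b x + t * a x)%R < y%:E.
Proof.
move=> a0 b0 ma mb afin bfin hI.
pose kn := fun (n : nat) x => elog (b x + n.+1%:R^-1 * a x)%R.
have mkn n : measurable_fun setT (kn n).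
  apply: (measurable_elog (g := fun x => b x + n.+1%:R^-1 * a x)%R).
  by apply: measurable_funD => //; apply: measurable_funM => //; exact: measurable_cst.
have meb : measurable_fun setT (fun x => elog (b x)) := measurable_elog mb.
set Pb := \int[F]_x (fun x => elog (b x))^\+ x.
set Nb := \int[F]_x (fun x => elog (b x))^\- x.
have Pbfin : Pb < +oo.
  apply: le_lt_trans bfin; apply: ge0_le_int.
  - by move=> *; exact: funepos_ge0.
  - exact: measurable_funepos.
  - by apply/measurable_EFinP.
  - by move=> x; have := elog_pos_le (b0 x); rewrite !funeposE.
have hI' : Pb - Nb < y%:E by rewrite /Pb /Nb -integralE.
set pb := fine Pb.
have Pbe : Pb = pb%:E.
  by rewrite /pb /Pb -fin_int //; move=> x; exact: funepos_ge0.
have Nb0 : 0 <= Nb by apply: integral_ge0 => x _; exact: funeneg_ge0.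
have [w [hw1 hw2]] : exists w : R, (pb - y < w)%R /\ w%:E < Nb.
  move: hI' Nb0; rewrite Pbe; case: Nb => [s| |] // h _.
  - exists ((pb - y + s) / 2)%R; rewrite -EFinB lte_fin in h.
    by split; [lra| rewrite lte_fin; lra].
  - by exists (pb - y + 1)%R; split; [lra| exact: ltry].
pose gn := fun n x => (kn n)^\- x.
have nd : forall x, {homo gn ^~ x : n m / (n <= m)%N >-> n <= m}.
  move=> x n m nm; rewrite /gn; apply: (@funeneg_le _ _ setT (kn m) (kn n)); last by rewrite in_setT.
  move=> z _; apply: elog_le.
    by apply: addr_ge0 => //; apply: mulr_ge0 => //; rewrite invr_ge0.
  by rewrite lerD2l; apply: ler_wpM2r => //; exact: inv_nat_le.
have mgn n : measurable_fun setT (gn n) := measurable_funeneg (mkn n).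
have MCT := monotone_convergence F measurableT mgn (fun n x _ => funeneg_ge0 _ _) (fun x _ => nd x).
pose NI := fun n => \int[F]_x gn n x.
have ndNI : {homo NI : n m / (n <= m)%N >-> n <= m}.
  move=> n m nm; apply: ge0_le_int => //.
  - by move=> *; exact: funeneg_ge0.
  - by move=> x; exact: nd.
have limNI : limn NI = ereal_sup (range NI).
  by apply: cvg_lim => //; exact: ereal_nondecreasing_cvgn.
have ge : Nb <= \int[F]_x (fun x => limn (gn ^~ x)) x.
  apply: ge0_le_int.
  - by move=> *; exact: funeneg_ge0.
  - exact: measurable_funeneg.
  - apply: (emeasurable_fun_cvg gn) => // x _.
    exact: ereal_nondecreasing_is_cvgn (nd x).
  move=> x; rewrite (cvg_lim _ (ereal_nondecreasing_cvgn (nd x))) //.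
  apply: le_esup_real => r hr.
  case: (ltrP r 0) => r0.
    exists (gn 0%N x); first by exists 0%N.
    by apply: le_trans (funeneg_ge0 _ _); rewrite lee_fin ltW.
  have hb : (b x < expR (- r))%R.
    by have := elog_neg_lt (b0 x) r0; rewrite funenegE; apply; rewrite funenegE in hr.
  have [n hn] := @small_inv R (a x) (expR (- r) - b x)%R (a0 x) (ltac:(by rewrite subr_gt0)).
  exists (gn n x); first by exists n.
  have := @elog_neg_ge R (b x + n.+1%:R^-1 * a x)%R r.
  rewrite /gn !funenegE; apply => //.
    by apply: addr_ge0 => //; apply: mulr_ge0 => //; rewrite invr_ge0.
  move: hn; set t := (_ * a x)%R; move=> hn; lra.
rewrite MCT limNI in ge.
have [_ [n1 _ <-] hn1] := ereal_sup_gt (lt_le_trans hw2 ge).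
set A := fine (\int[F]_x (a x)%:E).
have Ae : \int[F]_x (a x)%:E = A%:E by rewrite /A -fin_int // => x; rewrite lee_fin.
have A0 : (0 <= A)%R by rewrite -lee_fin -Ae; apply: integral_ge0 => x _; rewrite lee_fin.
have [n2 hn2] := @small_inv R A (w - (pb - y))%R A0 (ltac:(by rewrite subr_gt0)).
pose n := maxn n1 n2.
exists (n.+1%:R^-1)%R; split; first by rewrite invr_gt0.
rewrite integralE.
have hP : \int[F]_x (fun x => elog (b x + n.+1%:R^-1 * a x)%R)^\+ x <= (pb + n.+1%:R^-1 * A)%:E.
  apply: (@le_trans _ _ (\int[F]_x ((fun x => elog (b x))^\+ x + (n.+1%:R^-1 * a x)%:E))).
    apply: ge0_le_int.
    - by move=> *; exact: funepos_ge0.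
    - exact: measurable_funepos (mkn n).
    - apply: emeasurable_funD; first exact: measurable_funepos.
      by apply/measurable_EFinP; apply: measurable_funM => //; exact: measurable_cst.
    - move=> x; have := @elog_posD R (b x) (n.+1%:R^-1 * a x)%R (b0 x).
      rewrite !funeposE; apply; apply: mulr_ge0 => //; rewrite invr_ge0 //.
  have mEa : measurable_fun setT (fun x => (n.+1%:R^-1 * a x)%:E)%R.
    by apply/measurable_EFinP; apply: measurable_funM => //; exact: measurable_cst.
  have mA : measurable_fun setT (fun x => (a x)%:E) by apply/measurable_EFinP.
  have tpos : (0 <= n.+1%:R^-1 :> R)%R by rewrite invr_ge0.
  rewrite (ge0_integralD F measurableT (fun x _ => funepos_ge0 _ x) (measurable_funepos meb)
    (fun x _ => (mulr_ge0 tpos (a0 x) : 0 <= (n.+1%:R^-1 * a x)%:E)) mEa).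
  rewrite -/Pb Pbe EFinD leeD2l //.
  under eq_integral do rewrite EFinM.
  rewrite (ge0_integralZl_EFin F measurableT (f1 := fun x => (a x)%:E)
    (fun x _ => (a0 x : 0 <= (a x)%:E)) mA tpos).
  by rewrite Ae -EFinM.
have hN : w%:E < NI n.
  apply: lt_le_trans hn1 _; apply: ndNI; exact: leq_maxl.
have htA : (n.+1%:R^-1 * A <= n2.+1%:R^-1 * A)%R.
  by apply: ler_wpM2r => //; apply: inv_nat_le; exact: leq_maxr.
move: hN hP; rewrite /NI /gn /kn.
set Pn := \int[F]_x _^\+ x.
set Nn := \int[F]_x _^\- x.
have Pn0 : 0 <= Pn by apply: integral_ge0 => x _; exact: funepos_ge0.
move: Pn0; case: Pn => [p| |] //; case: Nn => [q| |] //.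
- rewrite !lte_fin !lee_fin => _ h1 h2.
  have H : ((p - q)%R)%:E < y%:E.
    rewrite lte_fin.
    move: htA hn2 h2; set u := (n.+1%:R^-1 * A)%R; set v := (n2.+1%:R^-1 * A)%R.
    move=> *; lra.
  by move: H; rewrite EFinB.
- by move=> _ _ _; rewrite /= addeNy ltNye.
Qed.

Definition EE {R : realType} (F : probability R R) (a b : R -> R) (p : R) : R :=
  fine (expeR (\int[F]_x elog (p * a x + (1 - p) * b x)%R)).

Lemma elog_le_id {R : realType} (y : R) : (0 <= y)%R -> elog y <= y%:E.
Proof.
by move=> y0; apply: le_trans (elog_pos_le y0); rewrite funeposE le_max lexx.
Qed.

Lemma Gfin {R : realType} (F : probability R R) (g : R -> R) :
  (forall x, 0 <= g x)%R -> measurable_fun setT g -> \int[F]_x (g x)%:E < +oo ->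
  \int[F]_x elog (g x) < +oo.
Proof.
move=> g0 mg gfin; apply: le_lt_trans gfin; apply: int_mono.
- exact: measurable_elog.
- by apply/measurable_EFinP.
- by move=> x; exact: elog_le_id.
Qed.

Lemma EmonoR {R : realType} (F : probability R R) (g1 g2 : R -> R) (l : R) :
  (0 < l)%R -> (forall x, 0 <= g2 x)%R -> (forall x, 0 <= g1 x)%R ->
  measurable_fun setT g1 -> measurable_fun setT g2 ->
  \int[F]_x (g1 x)%:E < +oo -> \int[F]_x (g2 x)%:E < +oo ->
  (forall x, l * g2 x <= g1 x)%R ->
  (l * fine (expeR (\int[F]_x elog (g2 x))) <= fine (expeR (\int[F]_x elog (g1 x))))%R.
Proof.
move=> l0 g20 g10 mg1 mg2 f1 f2 lg.
rewrite -lee_fin EFinM !expeR_fin ?(Gfin _ _ f1) ?(Gfin _ _ f2) //.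
exact: Emono.
Qed.

Lemma game_gp {R : realType} (F : probability R R) (a b : R -> R) (p : R) :
  is_game F a -> is_game F b -> (0 <= p <= 1)%R ->
  [/\ (forall x, 0 <= p * a x + (1 - p) * b x)%R,
      measurable_fun setT (fun x => p * a x + (1 - p) * b x)%R &
      \int[F]_x ((p * a x + (1 - p) * b x)%R)%:E < +oo].
Proof.
move=> [a0 ma _ afin] [b0 mb _ bfin] /andP[p0 p1].
have q0 : (0 <= 1 - p)%R by lra.
have g0 : (forall x, 0 <= p * a x + (1 - p) * b x)%R.
  by move=> x; apply: addr_ge0; apply: mulr_ge0.
have mg : measurable_fun setT (fun x => p * a x + (1 - p) * b x)%R.
  by apply: measurable_funD; apply: measurable_funM => //; exact: measurable_cst.
split => //.
apply: (@le_lt_trans _ _ (\int[F]_x ((a x)%:E + (b x)%:E))).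
  apply: ge0_le_int.
  - by move=> x; rewrite lee_fin.
  - by apply/measurable_EFinP.
  - by apply: emeasurable_funD; apply/measurable_EFinP.
  - move=> x; rewrite -EFinD lee_fin; have := a0 x; have := b0 x.
    move=> hb ha; rewrite lerD //.
      by rewrite -[leRHS]mul1r; apply: ler_wpM2r.
    by rewrite -[leRHS]mul1r; apply: ler_wpM2r => //; lra.
rewrite (ge0_integralD F measurableT (f1 := fun x => (a x)%:E) (f2 := fun x => (b x)%:E)).
- exact: lte_add_pinfty.
- by move=> x _; rewrite lee_fin.
- by apply/measurable_EFinP.
- by move=> x _; rewrite lee_fin.
- by apply/measurable_EFinP.
Qed.

Lemma EE_ge0 {R : realType} (F : probability R R) (a b : R -> R) (p : R) : (0 <= EE F a b p)%R.
Proof. by apply: fine_ge0; exact: expeR_ge0. Qed.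

Lemma EE_sym {R : realType} (F : probability R R) (a b : R -> R) (p : R) :
  EE F a b p = EE F b a (1 - p).
Proof.
rewrite /EE; congr (fine (expeR _)); apply: eq_integral => x _; congr elog.
by ring.
Qed.

Lemma EE_lower {R : realType} (F : probability R R) (a b : R -> R) (p0 p : R) :
  is_game F a -> is_game F b -> (0 <= p0)%R -> (p0 < p)%R -> (p < 1)%R ->
  ((1 - p) / (1 - p0) * EE F a b p0 <= EE F a b p)%R.
Proof.
move=> ga gb h0 h1 h2.
have [g0 mg0 f0] := game_gp (p := p0) ga gb (ltac:(apply/andP; split; lra)).
have [g1 mg1 f1] := game_gp (p := p) ga gb (ltac:(apply/andP; split; lra)).
rewrite /EE; apply: (@EmonoR R F (fun x => p * a x + (1 - p) * b x)%R
  (fun x => p0 * a x + (1 - p0) * b x)%R) => //.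
  by apply: divr_gt0; lra.
move=> x; have [a0 _ _ _] := ga; have [b0 _ _ _] := gb.
set l := ((1 - p) / (1 - p0))%R.
have e : (l * (1 - p0) = 1 - p)%R by rewrite /l divfK //; apply/eqP; lra.
have l1 : (l <= 1)%R by rewrite /l ler_pdivrMr; lra.
have l2 : (0 <= l)%R by rewrite /l divr_ge0 //; lra.
have lp : (l * p0 <= p)%R by nra.
rewrite mulrDr !mulrA e lerD2r; exact: ler_wpM2r.
Qed.

Lemma EE_upper {R : realType} (F : probability R R) (a b : R -> R) (p0 p : R) :
  is_game F a -> is_game F b -> (0 < p0)%R -> (p0 < p)%R -> (p <= 1)%R ->
  (p0 / p * EE F a b p <= EE F a b p0)%R.
Proof.
move=> ga gb h0 h1 h2.
have [g0 mg0 f0] := game_gp (p := p0) ga gb (ltac:(apply/andP; split; lra)).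
have [g1 mg1 f1] := game_gp (p := p) ga gb (ltac:(apply/andP; split; lra)).
rewrite /EE; apply: (@EmonoR R F (fun x => p0 * a x + (1 - p0) * b x)%R
  (fun x => p * a x + (1 - p) * b x)%R) => //.
  by apply: divr_gt0; lra.
move=> x; have [a0 _ _ _] := ga; have [b0 _ _ _] := gb.
set l := (p0 / p)%R.
have e : (l * p = p0)%R by rewrite /l divfK //; apply/eqP; lra.
have lp : (l * (1 - p) <= 1 - p0)%R.
  by rewrite /l mulrAC ler_pdivrMr; [nra| lra].
rewrite mulrDr !mulrA e lerD2l; apply: ler_wpM2r => //.
Qed.

Lemma EE_right {R : realType} (F : probability R R) (a b : R -> R) (p0 e : R) :
  is_game F a -> is_game F b -> (0 <= p0)%R -> (p0 < 1)%R -> (0 < e)%R ->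
  exists2 d : R, (0 < d)%R & forall p, (p0 < p)%R -> (p <= 1)%R -> (p - p0 < d)%R ->
    (`|EE F a b p - EE F a b p0| < e)%R.
Proof.
move=> ga gb h0 h1 e0.
set E0 := EE F a b p0.
have E00 : (0 <= E0)%R by apply: EE_ge0.
have hlow : forall p, (p0 < p)%R -> (p - p0 < 1 - p0)%R ->
    (p - p0 < e * (1 - p0) / (E0 + 1))%R -> (E0 - EE F a b p < e)%R.
  move=> p hp hp1 hpe.
  have := EE_lower ga gb h0 hp (ltac:(lra)); rewrite -/E0.
  set l := ((1 - p) / (1 - p0))%R; set Ep := EE F a b p => hl.
  have el : (l * (1 - p0) = 1 - p)%R by rewrite /l divfK //; apply/eqP; lra.
  have H1 : ((1 - p) * E0 <= (1 - p0) * Ep)%R.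
    rewrite -el mulrAC [X in (_ <= X)%R]mulrC; apply: ler_wpM2r; lra.
  have H2 : ((p - p0) * (E0 + 1) < e * (1 - p0))%R.
    by rewrite -ltr_pdivlMr //; lra.
  have H3 : ((1 - p0) * (E0 - Ep) < (1 - p0) * e)%R by nra.
  by rewrite ltr_pM2l in H3; lra.
have [du du0 hup] : exists2 du : R, (0 < du)%R & forall p, (p0 < p)%R -> (p <= 1)%R ->
    (p - p0 < du)%R -> (EE F a b p - E0 < e)%R.
  have [p0z|p0pos] : p0 = 0%R \/ (0 < p0)%R by move: h0; rewrite le_eqVlt => /orP[/eqP ->|]; [left|right].
    have [a0 ma _ afin] := ga; have [b0 mb _ bfin] := gb.
    have eqb : \int[F]_x elog (p0 * a x + (1 - p0) * b x)%R = \int[F]_x elog (b x).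
      by apply: eq_integral => x _; rewrite p0z mul0r add0r subr0 mul1r.
    have [g0 mg0 f0] := game_gp (p := p0) ga gb (ltac:(apply/andP; split; lra)).
    have E0e : E0%:E = expeR (\int[F]_x elog (b x)).
      by rewrite -eqb /E0 /EE expeR_fin // (Gfin _ _ f0).
    set y := ln (E0 + e).
    have ey : expeR y%:E = (E0 + e)%:E by rewrite /= lnK // posrE; lra.
    have hI : \int[F]_x elog (b x) < y%:E.
      by rewrite -lte_expeR -E0e ey lte_fin; lra.
    have [t [t0 ht]] := mct_claim a0 b0 ma mb afin bfin hI.
    exists t => // p hp hp1 hpt.
    rewrite p0z subr0 in hpt; rewrite p0z in hp.
    suff : (EE F a b p)%:E < (E0 + e)%:E by rewrite lte_fin; lra.
    have [g1 mg1 f1] := game_gp (p := p) ga gb (ltac:(apply/andP; split; lra)).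
    rewrite /EE expeR_fin ?(Gfin _ _ f1) //.
    apply: (@le_lt_trans _ _ (expeR (\int[F]_x elog (b x + t * a x)%R))); last by rewrite -ey lte_expeR.
    rewrite lee_expeR; apply: int_mono.
    - exact: measurable_elog mg1.
    - apply: (measurable_elog (g := fun x => b x + t * a x)%R).
      by apply: measurable_funD => //; apply: measurable_funM => //; exact: measurable_cst.
    - move=> x; apply: elog_le; first exact: g1.
      have := a0 x; have := b0 x; nra.
  exists (e * p0 / (E0 + 1))%R; first by apply: divr_gt0; [apply: mulr_gt0|lra].
  move=> p hp hp1 hpe.
  have := EE_upper ga gb p0pos hp hp1; rewrite -/E0.
  set Ep := EE F a b p => hl.
  have H1 : (p0 * Ep <= p * E0)%R.
    have pp : (0 < p)%R by lra.
    have e2 : (p * (p0 / p * Ep) = p0 * Ep)%R by field; apply/eqP; lra.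
    by rewrite -e2; apply: ler_wpM2l => //; lra.
  have H2 : ((p - p0) * (E0 + 1) < e * p0)%R.
    by rewrite -ltr_pdivlMr //; lra.
  have H3 : (p0 * (Ep - E0) < p0 * e)%R by nra.
  by rewrite ltr_pM2l in H3.
exists (Num.min (Num.min (1 - p0) (e * (1 - p0) / (E0 + 1))) du)%R.
  rewrite !lt_min du0 andbT; apply/andP; split; first lra.
  by apply: divr_gt0; [apply: mulr_gt0|]; lra.
move=> p hp hp1; rewrite !lt_min => /andP[/andP[d1 d2] d3].
have := hlow p hp d1 d2; have := hup p hp hp1 d3.
rewrite ltr_norml; move=> *; apply/andP; split; lra.
Qed.

Lemma EE_cont {R : realType} (F : probability R R) (a b : R -> R) (p0 e : R) :
  is_game F a -> is_game F b -> (0 <= p0 <= 1)%R -> (0 < e)%R ->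
  exists2 d : R, (0 < d)%R & forall p, (0 <= p <= 1)%R -> (`|p0 - p| < d)%R ->
    (`|EE F a b p0 - EE F a b p| < e)%R.
Proof.
move=> ga gb /andP[h0 h1] e0.
have [dR dR0 hR] : exists2 dR : R, (0 < dR)%R & forall p, (p0 < p)%R -> (p <= 1)%R ->
    (p - p0 < dR)%R -> (`|EE F a b p - EE F a b p0| < e)%R.
  case: (ltrP p0 1) => h; first exact: EE_right.
  by exists 1%R => // p hp hp1; lra.
have [dL dL0 hL] : exists2 dL : R, (0 < dL)%R & forall p, (0 <= p)%R -> (p < p0)%R ->
    (p0 - p < dL)%R -> (`|EE F a b p - EE F a b p0| < e)%R.
  case: (ltrP 0 p0) => h; last by exists 1%R => // p hp hpp; lra.
  have [d d0 hd] := @EE_right R F b a (1 - p0) e gb ga (ltac:(lra)) (ltac:(lra)) e0.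
  exists d => // p hp hpp hpd.
  rewrite (@EE_sym R F a b p) (@EE_sym R F a b p0); apply: hd; lra.
exists (Num.min dR dL)%R; first by rewrite lt_min dR0 dL0.
move=> p /andP[hp0 hp1]; rewrite lt_min => /andP[d1 d2]; rewrite distrC.
case: (ltgtP p p0) => hc.
- apply: hL => //; move: d2; rewrite ger0_norm //; lra.
- apply: hR => //; move: d1; rewrite ler0_norm; lra.
- by rewrite hc subrr normr0.
Qed.

Local Close Scope ereal_scope.
Unset Implicit Arguments.

Theorem lemmaD11 (R : realType) (r : R) (F : probability R R) (a b : R -> R) :
  is_game F a -> is_game F b ->
  {within `[0, 1], continuous (fgame F a b r)}.
Proof.
move=> ga gb; apply/subspace_continuousP => p0 hp0.
have hp0' : 0 <= p0 <= 1 by move: hp0; rewrite /= in_itv.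
apply/cvgrPdist_lt => e e0.
rewrite near_withinE.
have [d d0 hd] := EE_cont ga gb hp0' (mulr_gt0 e0 (expR_gt0 r)).
apply/nbhs_ballP; exists d => //= p pd hp.
have hp' : 0 <= p <= 1 by move: hp; rewrite /= in_itv.
change (`|EE F a b p0 / expR r - EE F a b p / expR r| < e).
rewrite -mulrBl normrM [`|(expR r)^-1|]gtr0_norm ?invr_gt0 ?expR_gt0 //.
rewrite ltr_pdivrMr ?expR_gt0 //.
apply: hd => //.
Qed.
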